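(* Let $1\le p\le q$, $n=p+q$, and let $\mu=(a_1,\dots,a_p\mid b_1,\dots,b_q)\in\mathbb{Z}^n$ be $\Delta^+(\mathfrak{k},\mathfrak{t})$-dominant and u-large with $\mu-\beta$ also $\Delta^+(\mathfrak{k},\mathfrak{t})$-dominant. If $a_1\le q$, $b_1\ge p+1$ and $a_1+b_1\ge 2p+q$, then no $\tau\in\Omega_{p,q}$ is $\mu$-deficient. Likewise, if $a_1\ge q+1$, $b_1\le p$ and $a_1+b_1\ge p+2q$, then no $\tau\in\Omega_{p,q}$ is $\mu$-deficient.
   Context: Weights are vectors in $\mathbb{R}^n$ written $(x_1,\dots,x_p\mid y_1,\dots,y_q)$, Euclidean norm $\|\cdot\|$. $\rho_c=(p,\dots,1\mid q,\dots,1)$, $\beta=(1,0,\dots,0\mid1,0,\dots,0)$. $\Delta^+(\mathfrak{k},\mathfrak{t})$-dominant means $x_1\ge\cdots\ge x_p\ge0$, $y_1\ge\cdots\ge y_q\ge0$. For $\nu\in\mathbb{Z}^n$, $\{\nu\}$ is obtained by taking absolute values of all coordinates and sorting the first $p$ and last $q$ coordinates separately in decreasing order; $\|\nu\|_{\mathfrak{k}}=\|\{\nu\}+\rho_c\|$. $\Omega_{p,q}$ is the set of $(x\mid y)\in\mathbb{Z}^n$ with $q\ge x_1\ge\cdots\ge x_p\ge0$ and $y_j=\#\{i\mid q-x_i\ge j\}$ ($1\le j\le q$). $\tau\in\Omega_{p,q}$ is $\mu$-deficient if $\|\mu-\tau\|_{\mathfrak{k}}\le\|\mu-\tau-\beta\|_{\mathfrak{k}}$.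 $\mu$ is u-large iff there exist $0\le f\le p$, $0\le g\le q$ with $\sum_{i=1}^f a_i+\sum_{j=1}^g b_j>2pq-2(p-f)(q-g)$. *)

(* Defs.v *)
(* Weights in Z^n = Z^p x Z^q, n = p+q, are pairs (x, y) of
   integer sequences, x = (x_1..x_p), y = (y_1..y_q). Euclidean norms are
   real numbers, computed in algC (a numClosedField containing the reals). *)
From mathcomp Require Import all_boot all_order all_algebra all_field.
Set Implicit Arguments. Unset Strict Implicit. Unset Printing Implicit Defensive.
Import Order.TTheory GRing.Theory Num.Theory.
Local Open Scope ring_scope.

Definition weight := (seq int * seq int)%type.

Definition is_weight (p q : nat) (w : weight) : Prop :=
  size w.1 = p /\ size w.2 = q.

Definition addw (u v : weight) : weight :=
  ([seq a.1 + a.2 | a <- zip u.1 v.1], [seq a.1 + a.2 | a <- zip u.2 v.2]).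
Definition subw (u v : weight) : weight :=
  ([seq a.1 - a.2 | a <- zip u.1 v.1], [seq a.1 - a.2 | a <- zip u.2 v.2]).

Definition rho_c (p q : nat) : weight :=
  ([seq (p - i)%:Z | i <- iota 0 p], [seq (q - j)%:Z | j <- iota 0 q]).

Definition beta (p q : nat) : weight :=
  (1 :: nseq p.-1 0, 1 :: nseq q.-1 0).

Definition sqnorm (w : weight) : int :=
  \sum_(a <- w.1) a ^+ 2 + \sum_(b <- w.2) b ^+ 2.
Definition enorm (w : weight) : algC := sqrtC ((sqnorm w)%:~R).

Definition braces (w : weight) : weight :=
  ([seq (k%:Z) | k <- sort geq [seq absz a | a <- w.1]],
   [seq (k%:Z) | k <- sort geq [seq absz b | b <- w.2]]).

Definition knorm (p q : nat) (w : weight) : algC :=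
  enorm (addw (braces w) (rho_c p q)).

Definition kdominant (w : weight) : Prop :=
  sorted (fun a b : int => b <= a) w.1 /\ all (fun a : int => 0 <= a) w.1 /\
  sorted (fun a b : int => b <= a) w.2 /\ all (fun b : int => 0 <= b) w.2.

Definition Omega (p q : nat) (tau : weight) : Prop :=
  is_weight p q tau /\
  sorted (fun a b : int => b <= a) tau.1 /\
  all (fun a : int => (0 <= a) && (a <= q%:Z)) tau.1 /\
  tau.2 = [seq (count (fun a : int => j%:Z <= q%:Z - a) tau.1)%:Z
          | j <- iota 1 q].

Definition deficient (p q : nat) (mu tau : weight) : Prop :=
  knorm p q (subw mu tau) <= knorm p q (subw (subw mu tau) (beta p q)).

Definition ularge (p q : nat) (mu : weight) : Prop :=
  exists f g : nat, (f <= p)%N /\ (g <= q)%N /\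
    \sum_(a <- take f mu.1) a + \sum_(b <- take g mu.2) b >
      (2 * p * q)%:Z - (2 * (p - f) * (q - g))%:Z.

Definition a1 (mu : weight) : int := head 0 mu.1.
Definition b1 (mu : weight) : int := head 0 mu.2.

(* Main.v *)
Require Import Defs.
From mathcomp Require Import all_boot all_order all_algebra all_field.
From mathcomp Require Import zify ring.
Import Order.TTheory GRing.Theory Num.Theory.
Local Open Scope ring_scope.

Definition blk (s : seq nat) : seq int :=
  [seq a.1 + a.2 | a <- zip [seq (k%:Z) | k <- s]
                            [seq ((size s - i)%N)%:Z | i <- iota 0 (size s)]].
Definition Q (s : seq nat) : int := \sum_(a <- blk s) a ^+ 2.
Definition MM (u : nat) (T : seq nat) : int := \sum_(b <- T) (maxn u b)%:Z.
Definition FF (s : seq nat) : int := \sum_(a <- s) MM a s + \sum_(a <- s) a%:Z.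
Fixpoint CC (n : nat) : int := if n is n'.+1 then (n%:Z) ^+ 2 + CC n' else 0.

Lemma blk_cons x s : blk (x :: s) = (x%:Z + (size s).+1%:Z) :: blk s.
Proof.
rewrite /blk /= subn0; congr (_ :: _); congr map; congr zip.
rewrite -(addn0 1%N) iotaDl -map_comp; apply: eq_map => i /=.
by rewrite add1n subSS.
Qed.

Lemma MM_cons u b T : MM u (b :: T) = (maxn u b)%:Z + MM u T.
Proof. by rewrite /MM big_cons. Qed.

Lemma MM_top x s : all (geq x) s -> MM x s = x%:Z * (size s)%:Z.
Proof.
elim: s => [|b s IH] /=; first by rewrite /MM big_nil mulr0.
move=> /andP [hb hs]; rewrite MM_cons IH //.
have -> : maxn x b = x by apply/maxn_idPl.
lia.
Qed.

Lemma FF_cons u T : FF (u :: T) = 2 * u%:Z + 2 * MM u T + FF T.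
Proof.
rewrite /FF !big_cons MM_cons maxnn.
have -> : \sum_(a <- T) MM a (u :: T) = MM u T + \sum_(a <- T) MM a T.
  under eq_bigr => a _ do rewrite MM_cons maxnC.
  by rewrite big_split.
set X := \sum_(a <- T) MM a T. set Y := \sum_(a <- T) (a%:Z). set Z := MM u T. lia.
Qed.

Lemma Q_sorted s : sorted geq s ->
  Q s = \sum_(k <- s) (k%:Z) ^+ 2 + CC (size s) + FF s.
Proof.
elim: s => [|x s IH] hs; first by rewrite /Q /FF /blk /= !big_nil.
have hs' : sorted geq s by apply: path_sorted hs.
have ha : all (geq x) s.
  apply: order_path_min hs => a b c /= h1 h2; exact: leq_trans h2 h1.
rewrite /Q blk_cons big_cons -/(Q s) IH // FF_cons MM_top // big_cons /=.
rewrite !expr2. lia.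
Qed.

Lemma MM_mono u T : MM u T <= MM u.+1 T <= MM u T + (size T)%:Z.
Proof.
elim: T => [|b T IH] /=; first by rewrite /MM !big_nil.
rewrite !MM_cons. move: IH; lia.
Qed.

Lemma FF_perm s1 s2 : perm_eq s1 s2 -> FF s1 = FF s2.
Proof.
move=> hp; rewrite /FF.
have e : forall a, MM a s1 = MM a s2 by move=> a; apply: perm_big.
under eq_bigr => a _ do rewrite e.
by rewrite (perm_big _ hp) (perm_big s2 hp).
Qed.

Definition A (l : seq int) : int := Q (sort geq (map absz l)).

Lemma A_eq l : A l = \sum_(a <- l) a ^+ 2 + CC (size l) + FF (map absz l).
Proof.
have hp : perm_eq (sort geq (map absz l)) (map absz l) by rewrite perm_sort.
rewrite /A Q_sorted; last by apply: sort_sorted => a b; apply: leq_total.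
rewrite size_sort size_map (FF_perm _ _ hp) (perm_big [seq `|i|%N | i <- l] hp) big_map.
congr (_ + _ + _); apply: eq_bigr => a _; by rewrite abszE real_normK ?num_real.
Qed.

Lemma A_diff (v w : int) (t : seq int) : w = v - 1 ->
  2 * v - 3 - 2 * (size t)%:Z <= A (v :: t) - A (w :: t) /\
  (1 <= v -> 2 * v + 1 <= A (v :: t) - A (w :: t)).
Proof.
move=> hw.
rewrite !A_eq /= !big_cons !FF_cons.
have sq : v ^+ 2 - w ^+ 2 = 2 * v - 1 by rewrite hw; ring.
set St := \sum_(a <- t) a ^+ 2.
set F := FF _. set C := CC _.
have hs : size [seq `|i|%N | i <- t] = size t by rewrite size_map.
case: (lerP 1 v) => hv.
  have e1 : absz v = (absz w).+1 by lia.
  have ev : (absz v)%:Z = v by lia.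
  have ev' : (absz w)%:Z = w by lia.
  have := MM_mono (absz w) [seq `|i|%N | i <- t].
  rewrite -e1 hs ev ev'.
  set M1 := MM _ _. set M2 := MM _ _.
  move: sq; lia.
have e1 : absz w = (absz v).+1 by lia.
have ev : (absz v)%:Z = - v by lia.
have ev' : (absz w)%:Z = - w by lia.
have := MM_mono (absz v) [seq `|i|%N | i <- t].
rewrite -e1 hs ev ev'.
set M1 := MM _ _. set M2 := MM _ _.
move: sq; lia.
Qed.

Lemma sqnorm_split p q (w : weight) : size w.1 = p -> size w.2 = q ->
  sqnorm (addw (braces w) (rho_c p q)) = A w.1 + A w.2.
Proof.
case: w => l r /= hl hr.
by rewrite /sqnorm /addw /braces /rho_c /A /Q /blk /= !size_sort !size_map hl hr.
Qed.

Lemma sqnorm_ge0 w : 0 <= sqnorm w.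
Proof. by rewrite /sqnorm addr_ge0 // sumr_ge0 // => i _; rewrite sqr_ge0. Qed.

Lemma sub_nseq (l : seq int) n : size l = n -> [seq a.1 - a.2 | a <- zip l (nseq n 0)] = l.
Proof.
elim: l n => [|a l IH] [|n] //= [hn]; by rewrite subr0 IH.
Qed.

Lemma reduce p q mu tau : (1 <= p)%N -> (1 <= q)%N -> is_weight p q mu -> Omega p q tau ->
  deficient p q mu tau ->
  exists x c rx ry, [/\ 0 <= x <= q%:Z, x + c <= (p + q)%:Z - 1, c <= p%:Z, (size rx = p.-1 /\ size ry = q.-1) &
   A ((a1 mu - x) :: rx) + A ((b1 mu - c) :: ry) <= A ((a1 mu - x - 1) :: rx) + A ((b1 mu - c - 1) :: ry)].
Proof.
case: mu => [ml mr]; case: tau => [tl tr] /= hp hq [/= hml hmr] [[/= htl htr] [_ [hall htr']]].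
case: ml hml => [|m ms] /= hms; first by move: hp; rewrite -hms.
case: mr hmr => [|b bs] /= hbs; first by move: hq; rewrite -hbs.
case: tl htl hall htr' => [|x xs] /= hxs; first by move: hp; rewrite -hxs.
move=> /andP[hx hall] htr'.
have hi : iota 1 q = 1%N :: iota 2 q.-1 by case: q hq {hbs htr htr' hx hall}.
rewrite hi /= in htr'. rewrite htr' /= in htr *.
set cs := [seq _ | j <- iota 2 q.-1] in htr htr' *.
set P := (fun a : int => (1%Z <= q%:Z - a)).
set c := (nat_of_bool (1%Z <= q%:Z - x)%R + count P xs)%N in htr' *.
set rx := [seq a.1 - a.2 | a <- zip ms xs].
set ry := [seq a.1 - a.2 | a <- zip bs cs].
have hrx : size rx = p.-1.
  have e : size xs = size ms by apply: succn_inj; rewrite hms hxs.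
  by rewrite size_map size_zip e minnn -hms.
have hry : size ry = q.-1.
  have e : size cs = size bs by apply: succn_inj; rewrite hbs htr.
  by rewrite size_map size_zip e minnn -hbs.
have e1 : subw (m :: ms, b :: bs) (x :: xs, c%:Z :: cs) = ((m - x) :: rx, (b - c%:Z) :: ry) by [].
have e2 : subw ((m - x) :: rx, (b - c%:Z) :: ry) (beta p q) = ((m - x - 1) :: rx, (b - c%:Z - 1) :: ry).
  by rewrite /subw /beta /= !sub_nseq.
rewrite /deficient.
change (subw (m :: ms, b :: bs) (x :: xs, c%:Z :: cs)) with ((m - x) :: rx, (b - c%:Z) :: ry).
rewrite e2 /knorm /enorm ler_sqrtC ?nnegrE ?ler0z ?sqnorm_ge0 // ler_int.
rewrite !sqnorm_split /=; try (by rewrite hrx prednK); try (by rewrite hry prednK).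
move=> H; have hc := count_size P xs.
exists x, c%:Z, rx, ry; split => //.
rewrite /c; case: (boolP (1%Z <= q%:Z - x)) => hP /=; lia.
rewrite /c; case: (boolP (1%Z <= q%:Z - x)) => hP /=; lia.

Qed.

Theorem mainTheorem9 (p q : nat) (mu : weight) :
  (1 <= p)%N -> (p <= q)%N ->
  is_weight p q mu ->
  kdominant mu -> ularge p q mu -> kdominant (subw mu (beta p q)) ->
  ((a1 mu <= q%:Z /\ (p + 1)%:Z <= b1 mu /\ (2 * p + q)%:Z <= a1 mu + b1 mu) ->
     forall tau : weight, Omega p q tau -> ~ deficient p q mu tau) /\
  (((q + 1)%:Z <= a1 mu /\ b1 mu <= p%:Z /\ (p + 2 * q)%:Z <= a1 mu + b1 mu) ->
     forall tau : weight, Omega p q tau -> ~ deficient p q mu tau).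
Proof.
move=> hp hpq hw _ _ _.
have hq : (1 <= q)%N by apply: leq_trans hpq.
have hp1 : (p.-1)%:Z = p%:Z - 1 by lia.
have hq1 : (q.-1)%:Z = q%:Z - 1 by lia.
split => -[h1 [h2 h3]] tau ht hd;
  have [x [c [rx [ry [hx hxc hc [hrx hry] H]]]]] := reduce _ _ _ _ hp hq hw ht hd;
  have [Dx1 Dx2] := A_diff (a1 mu - x) (a1 mu - x - 1) rx erefl;
  have [Dy1 Dy2] := A_diff (b1 mu - c) (b1 mu - c - 1) ry erefl;
  rewrite hrx hp1 in Dx1; rewrite hry hq1 in Dy1;
  move: H Dx1 Dx2 Dy1 Dy2;
  set X1 := A _; set X2 := A _; set Y1 := A _; set Y2 := A _; lia.
Qed.
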